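(* Let $F$ and $G$ be finite nonempty sets of linear (affine) functions $\mathbb{R}\to\mathbb{R}$, and let $H=\{f\circ g : f\in F, g\in G\}$. For a finite set $S$ of such functions write $S_\downarrow(x)=\min_{f\in S}f(x)$ and $S_\uparrow(x)=\max_{f\in S}f(x)$. Then $H_\downarrow(x)=\min\{F_\downarrow(G_\downarrow(x)),F_\downarrow(G_\uparrow(x))\}$, $H_\uparrow(x)=\max\{F_\uparrow(G_\downarrow(x)),F_\uparrow(G_\uparrow(x))\}$, $p(H_\downarrow)\le 4p(F_\downarrow)+2p(G_\downarrow)+2p(G_\uparrow)$, and $p(H_\uparrow)\le 4p(F_\uparrow)+2p(G_\downarrow)+2p(G_\uparrow)$.
   Context: For a piecewise linear function $f:\mathbb{R}\to\mathbb{R}$, $p(f)$ denotes its number of (maximal linear) pieces. ''Linear function'' means a function of the form $x\mapsto ax+b$. *)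

(* Defs.v *)
From Stdlib Require Import Reals Lra List Sorted ClassicalEpsilon.
Import ListNotations.
Open Scope R_scope.

Definition affine (f : R -> R) : Prop := exists a b : R, forall x, f x = a * x + b.

Definition affine_on (f : R -> R) (I : R -> Prop) : Prop :=
  exists a b : R, forall x, I x -> f x = a * x + b.

(* f is piecewise linear with (at most) n pieces: there are breakpoints
   b_0 < b_1 < ... < b_{n-2} such that f is affine on each of the n intervals
   (-oo, b_0], [b_0, b_1], ..., [b_{n-2}, +oo). *)
Definition has_pieces (f : R -> R) (n : nat) : Prop :=
  exists l : list R, S (length l) = n /\ Sorted Rlt l /\
    forall i : nat, (i <= length l)%nat ->
      affine_on f (fun x => (i = 0%nat \/ nth (i - 1) l 0 <= x) /\
                            (i = length l \/ x <= nth i l 0)).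

(* p(f): the number of maximal linear pieces = the least such n. *)
Definition npieces (f : R -> R) : nat :=
  epsilon (inhabits 0%nat)
    (fun n => has_pieces f n /\ forall m, has_pieces f m -> (n <= m)%nat).

Definition lmin (l : list R) : R :=
  match l with [] => 0 | x :: t => fold_right Rmin x t end.
Definition lmax (l : list R) : R :=
  match l with [] => 0 | x :: t => fold_right Rmax x t end.

Definition Sdown (S : list (R -> R)) (x : R) : R := lmin (map (fun f => f x) S).
Definition Sup (S : list (R -> R)) (x : R) : R := lmax (map (fun f => f x) S).

Definition compset (F G : list (R -> R)) : list (R -> R) :=
  map (fun fg => fun x => (fst fg) ((snd fg) x)) (list_prod F G).

(* Main.v *)
Require Import Defs.
From Stdlib Require Import Reals List.
From Stdlib Require Import Lra Lia Sorted ClassicalEpsilon FunctionalExtensionality PropExtensionality Classical.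
Import ListNotations.
Open Scope R_scope.

Lemma fmin_prop (t : list R) (x : R) :
  fold_right Rmin x t <= x /\ (forall y, In y t -> fold_right Rmin x t <= y) /\
  (fold_right Rmin x t = x \/ In (fold_right Rmin x t) t).
Proof.
  induction t as [|y t IH]; simpl.
  - split; [lra|split; [intros ? []|left; reflexivity]].
  - destruct IH as [H1 [H2 H3]].
    set (m := fold_right Rmin x t) in *.
    destruct (Rle_dec y m); [rewrite Rmin_left by lra | rewrite Rmin_right by lra].
    + split; [lra|split]; [intros z [<-|Hz]; [lra| specialize (H2 z Hz); lra]|auto].
    + split; [lra|split]; [intros z [<-|Hz]; [lra| auto]|].
      destruct H3; auto.
Qed.

Lemma fmax_prop (t : list R) (x : R) :
  x <= fold_right Rmax x t /\ (forall y, In y t -> y <= fold_right Rmax x t) /\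
  (fold_right Rmax x t = x \/ In (fold_right Rmax x t) t).
Proof.
  induction t as [|y t IH]; simpl.
  - split; [lra|split; [intros ? []|left; reflexivity]].
  - destruct IH as [H1 [H2 H3]].
    set (m := fold_right Rmax x t) in *.
    destruct (Rle_dec y m); [rewrite Rmax_right by lra | rewrite Rmax_left by lra].
    + split; [lra|split]; [intros z [<-|Hz]; [lra| auto]|].
      destruct H3; auto.
    + split; [lra|split]; [intros z [<-|Hz]; [lra| specialize (H2 z Hz); lra]|auto].
Qed.

Lemma lmin_le l y : In y l -> lmin l <= y.
Proof.
  destruct l as [|x t]; simpl; [tauto|].
  destruct (fmin_prop t x) as [H1 [H2 _]]. intros [<-|H]; auto.
Qed.
Lemma lmin_in l : l <> [] -> In (lmin l) l.
Proof.
  destruct l as [|x t]; simpl; [tauto|].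
  destruct (fmin_prop t x) as [_ [_ [H|H]]]; auto.
Qed.
Lemma lmax_ge l y : In y l -> y <= lmax l.
Proof.
  destruct l as [|x t]; simpl; [tauto|].
  destruct (fmax_prop t x) as [H1 [H2 _]]. intros [<-|H]; auto.
Qed.
Lemma lmax_in l : l <> [] -> In (lmax l) l.
Proof.
  destruct l as [|x t]; simpl; [tauto|].
  destruct (fmax_prop t x) as [_ [_ [H|H]]]; auto.
Qed.
Lemma lmin_eq l y : In y l -> (forall z, In z l -> y <= z) -> lmin l = y.
Proof.
  intros Hy Hz. assert (l <> []) by (destruct l; simpl in *; congruence).
  pose proof (lmin_le l y Hy). pose proof (Hz _ (lmin_in l H)). lra.
Qed.
Lemma lmax_eq l y : In y l -> (forall z, In z l -> z <= y) -> lmax l = y.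
Proof.
  intros Hy Hz. assert (l <> []) by (destruct l; simpl in *; congruence).
  pose proof (lmax_ge l y Hy). pose proof (Hz _ (lmax_in l H)). lra.
Qed.

Lemma Sdown_le S f x : In f S -> Sdown S x <= f x.
Proof. intros H. apply lmin_le. apply in_map_iff. eauto. Qed.
Lemma Sdown_att S x : S <> [] -> exists f, In f S /\ Sdown S x = f x.
Proof.
  intros H. assert (map (fun f => f x) S <> []) by (destruct S; simpl; congruence).
  destruct (proj1 (in_map_iff _ _ _) (lmin_in _ H0)) as [f [Hf1 Hf2]].
  exists f; split; auto.
Qed.
Lemma Sup_ge S f x : In f S -> f x <= Sup S x.
Proof. intros H. apply lmax_ge. apply in_map_iff. eauto. Qed.
Lemma Sup_att S x : S <> [] -> exists f, In f S /\ Sup S x = f x.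
Proof.
  intros H. assert (map (fun f => f x) S <> []) by (destruct S; simpl; congruence).
  destruct (proj1 (in_map_iff _ _ _) (lmax_in _ H0)) as [f [Hf1 Hf2]].
  exists f; split; auto.
Qed.
Lemma Sdown_eq S x y : (exists f, In f S /\ f x = y) -> (forall f, In f S -> y <= f x) -> Sdown S x = y.
Proof.
  intros [f [Hf <-]] H. apply lmin_eq.
  - apply in_map_iff; eauto.
  - intros z Hz. apply in_map_iff in Hz. destruct Hz as [g [<- Hg]]. auto.
Qed.
Lemma Sup_eq S x y : (exists f, In f S /\ f x = y) -> (forall f, In f S -> f x <= y) -> Sup S x = y.
Proof.
  intros [f [Hf <-]] H. apply lmax_eq.
  - apply in_map_iff; eauto.
  - intros z Hz. apply in_map_iff in Hz. destruct Hz as [g [<- Hg]]. auto.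
Qed.

Lemma in_compset F G f g : In f F -> In g G -> In (fun x => f (g x)) (compset F G).
Proof.
  intros. unfold compset. apply in_map_iff. exists (f, g). split; auto.
  apply in_prod; auto.
Qed.
Lemma compset_in F G h : In h (compset F G) -> exists f g, In f F /\ In g G /\ h = (fun x => f (g x)).
Proof.
  unfold compset. intros H. apply in_map_iff in H. destruct H as [[f g] [<- H]].
  apply in_prod_iff in H. exists f, g. simpl. tauto.
Qed.

Lemma affine_between f p y q : affine f -> p <= y <= q -> Rmin (f p) (f q) <= f y <= Rmax (f p) (f q).
Proof.
  intros [a [b Hf]] Hy. rewrite !Hf. unfold Rmin, Rmax.
  destruct (Rle_dec (a*p+b) (a*q+b)); destruct (Rle_dec 0 a); split; nra.
Qed.

Lemma part12 (F G : list (R -> R)) :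
  F <> nil -> G <> nil -> Forall affine F -> Forall affine G ->
  (forall x, Sdown (compset F G) x = Rmin (Sdown F (Sdown G x)) (Sdown F (Sup G x))) /\
  (forall x, Sup (compset F G) x = Rmax (Sup F (Sdown G x)) (Sup F (Sup G x))).
Proof.
  intros HF HG AF AG. rewrite Forall_forall in AF, AG. split; intros x.
  - apply Sdown_eq.
    + destruct (Sdown_att G x HG) as [g1 [Hg1 E1]]. destruct (Sup_att G x HG) as [g2 [Hg2 E2]].
      destruct (Sdown_att F (Sdown G x) HF) as [f1 [Hf1 E3]].
      destruct (Sdown_att F (Sup G x) HF) as [f2 [Hf2 E4]].
      unfold Rmin; destruct (Rle_dec _ _).
      * exists (fun x => f1 (g1 x)); split; [apply in_compset; auto| congruence].
      * exists (fun x => f2 (g2 x)); split; [apply in_compset; auto| congruence].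
    + intros h Hh. destruct (compset_in _ _ _ Hh) as [f [g [Hf [Hg ->]]]].
      assert (Sdown G x <= g x <= Sup G x) by (split; [apply Sdown_le|apply Sup_ge]; auto).
      pose proof (affine_between f _ _ _ (AF f Hf) H).
      pose proof (Sdown_le F f (Sdown G x) Hf). pose proof (Sdown_le F f (Sup G x) Hf).
      revert H0; unfold Rmin; destruct (Rle_dec _ _); destruct (Rle_dec _ _); lra.
  - apply Sup_eq.
    + destruct (Sdown_att G x HG) as [g1 [Hg1 E1]]. destruct (Sup_att G x HG) as [g2 [Hg2 E2]].
      destruct (Sup_att F (Sdown G x) HF) as [f1 [Hf1 E3]].
      destruct (Sup_att F (Sup G x) HF) as [f2 [Hf2 E4]].
      unfold Rmax; destruct (Rle_dec _ _).
      * exists (fun x => f2 (g2 x)); split; [apply in_compset; auto| congruence].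
      * exists (fun x => f1 (g1 x)); split; [apply in_compset; auto| congruence].
    + intros h Hh. destruct (compset_in _ _ _ Hh) as [f [g [Hf [Hg ->]]]].
      assert (Sdown G x <= g x <= Sup G x) by (split; [apply Sdown_le|apply Sup_ge]; auto).
      pose proof (affine_between f _ _ _ (AF f Hf) H).
      pose proof (Sup_ge F f (Sdown G x) Hf). pose proof (Sup_ge F f (Sup G x) Hf).
      revert H0; unfold Rmax; destruct (Rle_dec _ _); destruct (Rle_dec _ _); lra.
Qed.



Definition concave (g : R -> R) := forall x y z, x <= y <= z ->
  (z - x) * g y >= (z - y) * g x + (y - x) * g z.
Definition cont (h : R -> R) (p : R) := forall e, 0 < e -> exists d, 0 < d /\
  forall x, Rabs (x - p) < d -> Rabs (h x - h p) < e.

Lemma concave_affine f : affine f -> concave f.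
Proof. intros [a [b H]] x y z Hy. rewrite !H. nra. Qed.

Lemma concave_min f g : concave f -> concave g -> concave (fun x => Rmin (f x) (g x)).
Proof.
  intros Cf Cg x y z Hy. specialize (Cf x y z Hy). specialize (Cg x y z Hy).
  pose proof (Rmin_l (f x) (g x)). pose proof (Rmin_r (f x) (g x)).
  pose proof (Rmin_l (f z) (g z)). pose proof (Rmin_r (f z) (g z)).
  assert (0 <= z - y) by lra. assert (0 <= y - x) by lra.
  assert ((z - y) * Rmin (f x) (g x) <= (z - y) * f x) by (apply Rmult_le_compat_l; lra).
  assert ((z - y) * Rmin (f x) (g x) <= (z - y) * g x) by (apply Rmult_le_compat_l; lra).
  assert ((y - x) * Rmin (f z) (g z) <= (y - x) * f z) by (apply Rmult_le_compat_l; lra).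
  assert ((y - x) * Rmin (f z) (g z) <= (y - x) * g z) by (apply Rmult_le_compat_l; lra).
  destruct (Rle_dec (f y) (g y)); [rewrite (Rmin_left (f y)) by lra | rewrite (Rmin_right (f y)) by lra]; lra.
Qed.

Lemma fold_concave (f : R -> R) (S : list (R -> R)) : affine f -> Forall affine S ->
  concave (fun x => fold_right Rmin (f x) (map (fun h => h x) S)).
Proof.
  intros Af AS. induction S as [|h S IH]; simpl.
  - apply concave_affine; auto.
  - inversion AS; subst. apply (concave_min h (fun x => fold_right Rmin (f x) (map (fun h => h x) S))).
    + apply concave_affine; auto.
    + apply IH; auto.
Qed.

Lemma Sdown_concave S : Forall affine S -> concave (Sdown S).
Proof.
  intros AS. destruct S as [|f S].
  - intros x y z H. unfold Sdown; simpl. lra.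
  - inversion AS; subst. unfold Sdown. simpl. apply fold_concave; auto.
Qed.

Lemma cont_affine f p : affine f -> cont f p.
Proof.
  intros [a [b H]] e He. exists (e / (Rabs a + 1)).
  assert (0 < Rabs a + 1) by (pose proof (Rabs_pos a); lra).
  split. { apply Rdiv_lt_0_compat; lra. }
  intros x Hx. rewrite !H. replace (a * x + b - (a * p + b)) with (a * (x - p)) by ring.
  rewrite Rabs_mult.
  assert (Rabs (x - p) * (Rabs a + 1) < e).
  { apply Rmult_lt_reg_r with (/ (Rabs a + 1)). apply Rinv_0_lt_compat; lra.
    rewrite Rmult_assoc, Rinv_r by lra. rewrite Rmult_1_r. exact Hx. }
  pose proof (Rabs_pos a). pose proof (Rabs_pos (x - p)). nra.
Qed.

Lemma Rmin_close a b c d e : Rabs (a - c) < e -> Rabs (b - d) < e -> Rabs (Rmin a b - Rmin c d) < e.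
Proof.
  intros H1 H2. apply Rabs_def2 in H1. apply Rabs_def2 in H2. apply Rabs_def1;
  unfold Rmin; destruct (Rle_dec a b); destruct (Rle_dec c d); lra.
Qed.

Lemma cont_min f g p : cont f p -> cont g p -> cont (fun x => Rmin (f x) (g x)) p.
Proof.
  intros Cf Cg e He. destruct (Cf e He) as [d1 [Hd1 H1]]. destruct (Cg e He) as [d2 [Hd2 H2]].
  exists (Rmin d1 d2). split. { apply Rmin_glb_lt; auto. }
  intros x Hx. apply Rmin_close.
  - apply H1. pose proof (Rmin_l d1 d2). lra.
  - apply H2. pose proof (Rmin_r d1 d2). lra.
Qed.

Lemma Sdown_cont S p : Forall affine S -> cont (Sdown S) p.
Proof.
  intros AS. destruct S as [|f S].
  - intros e He. exists 1. split; [lra|]. intros. unfold Sdown; simpl. rewrite Rminus_0_r, Rabs_R0. auto.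
  - inversion AS; subst. unfold Sdown. simpl. clear AS.
    induction S as [|h S IH]; simpl.
    + apply cont_affine; auto.
    + inversion H2; subst. apply (cont_min h (fun x => fold_right Rmin (f x) (map (fun h => h x) S))).
      * apply cont_affine; auto.
      * apply IH; auto.
Qed.

Definition negf (f : R -> R) : R -> R := fun x => - f x.

Lemma fold_neg (t : list R) x : fold_right Rmax x t = - fold_right Rmin (- x) (map Ropp t).
Proof.
  induction t as [|y t IH]; simpl. lra.
  rewrite IH. set (F := fold_right Rmin (- x) (map Ropp t)).
  destruct (Rle_dec y (- F)); [rewrite Rmax_right by lra; rewrite Rmin_right by lra
  | rewrite Rmax_left by lra; rewrite Rmin_left by lra]; lra.
Qed.

Lemma Sup_neg S x : Sup S x = - Sdown (map negf S) x.
Proof.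
  unfold Sup, Sdown. rewrite map_map. unfold negf.
  destruct S as [|f S]; simpl. lra.
  rewrite fold_neg. rewrite map_map. reflexivity.
Qed.

Lemma Sup_neg_fun S : Sup S = (fun x => - Sdown (map negf S) x).
Proof. apply functional_extensionality. apply Sup_neg. Qed.

Lemma affine_on_neg h I : affine_on h I -> affine_on (fun x => - h x) I.
Proof. intros [a [b H]]. exists (-a), (-b). intros x Hx. rewrite H by auto. ring. Qed.

Lemma has_pieces_neg h n : has_pieces h n -> has_pieces (fun x => - h x) n.
Proof.
  intros [l [H1 [H2 H3]]]. exists l. split; auto. split; auto.
  intros i Hi. apply affine_on_neg. auto.
Qed.

Lemma has_pieces_neg_iff h n : has_pieces (fun x => - h x) n <-> has_pieces h n.
Proof.
  split; [|apply has_pieces_neg].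
  intros H. apply has_pieces_neg in H.
  replace (fun x => - - h x) with h in H; auto.
  apply functional_extensionality; intros; ring.
Qed.

Lemma npieces_neg h : npieces (fun x => - h x) = npieces h.
Proof.
  unfold npieces. f_equal. apply functional_extensionality. intros n.
  apply propositional_extensionality.
  split; intros [H1 H2]; split.
  - apply has_pieces_neg_iff; auto.
  - intros m Hm. apply H2. apply has_pieces_neg_iff; auto.
  - apply has_pieces_neg_iff; auto.
  - intros m Hm. apply H2. apply has_pieces_neg_iff; auto.
Qed.

Lemma negf_affine S : Forall affine S -> Forall affine (map negf S).
Proof.
  intros H. apply Forall_map. eapply Forall_impl; [|exact H].
  intros f [a [b Hf]]. exists (-a), (-b). intros x. unfold negf. rewrite Hf. ring.
Qed.

Lemma map_neq_nil {A B} (f : A -> B) l : l <> [] -> map f l <> [].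
Proof. destruct l; simpl; congruence. Qed.

Lemma npieces_spec h : (exists n, has_pieces h n) ->
  has_pieces h (npieces h) /\ forall m, has_pieces h m -> (npieces h <= m)%nat.
Proof.
  intros [n Hn]. unfold npieces. apply epsilon_spec.
  induction n as [n IH] using (well_founded_induction Wf_nat.lt_wf).
  destruct (classic (exists m, (m < n)%nat /\ has_pieces h m)) as [[m [Hm1 Hm2]]|Hno].
  - apply (IH m Hm1 Hm2).
  - exists n. split; auto. intros m Hm. destruct (Nat.lt_ge_cases m n); auto.
    exfalso; apply Hno; eauto.
Qed.



Definition convex_set (C : R -> Prop) := forall x y z, C x -> C z -> x <= y <= z -> C y.

Lemma sups_exist (Cs : list (R -> Prop)) : (forall C, In C Cs -> convex_set C) ->
  exists L : list R, (length L <= length Cs)%nat /\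
   forall C, In C Cs -> forall x y, C x -> ~ C y -> x <= y -> exists s, In s L /\ x <= s <= y.
Proof.
  induction Cs as [|C Cs IH]; intros HC.
  - exists []. split; simpl; auto. intros C [].
  - destruct IH as [L [HL1 HL2]]. { intros; apply HC; simpl; auto. }
    assert (CC : convex_set C) by (apply HC; simpl; auto).
    assert (UB : forall x0 y0, C x0 -> ~ C y0 -> x0 <= y0 -> forall d, C d -> d <= y0).
    { intros x0 y0 H1 H2 H3 d Hd. destruct (Rle_dec d y0); auto. exfalso. apply H2.
      apply (CC x0 y0 d); auto; lra. }
    destruct (classic (exists x0 y0, C x0 /\ ~ C y0 /\ x0 <= y0)) as [[x0 [y0 [H1 [H2 H3]]]]|Hno].
    + destruct (completeness C) as [s [Hs1 Hs2]].
      { exists y0. intros d Hd. eapply UB; eauto. }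
      { eauto. }
      exists (s :: L). split; simpl; [lia|].
      intros C' [<-|HC'] x y Hx Hy Hxy.
      * exists s. split; auto. split; [apply Hs1; auto|]. apply Hs2. intros d Hd. eapply UB; eauto.
      * destruct (HL2 C' HC' x y Hx Hy Hxy) as [s' [? ?]]. exists s'; auto.
    + exists L. split; simpl; [lia|].
      intros C' [<-|HC'] x y Hx Hy Hxy.
      * exfalso. apply Hno. eauto.
      * apply (HL2 C' HC' x y Hx Hy Hxy).
Qed.

Lemma ins_ex (l : list R) : StronglySorted Rlt l -> forall x, exists l',
  StronglySorted Rlt l' /\ (forall y, In y l' <-> y = x \/ In y l) /\ (length l' <= S (length l))%nat.
Proof.
  induction l as [|y t IH]; intros Hs x.
  - exists [x]. split; [repeat constructor|]. split; simpl; [intros; firstorder congruence|lia].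
  - inversion Hs; subst. destruct (Rtotal_order x y) as [Hxy|[Hxy|Hxy]].
    + exists (x :: y :: t). split.
      * constructor; [exact Hs|]. rewrite Forall_forall in *. intros z [<-|Hz]; [lra|].
        specialize (H2 z Hz); lra.
      * split; [intros; simpl; firstorder congruence|simpl; lia].
    + subst. exists (y :: t). split; auto. split; [intros; simpl; firstorder congruence|simpl; lia].
    + destruct (IH H1 x) as [t' [Ht1 [Ht2 Ht3]]]. exists (y :: t'). split.
      * constructor; auto. rewrite Forall_forall in *. intros z Hz. apply Ht2 in Hz.
        destruct Hz as [->|Hz]; auto.
      * split; [|simpl; lia]. intros z; simpl. rewrite Ht2. tauto.
Qed.

Lemma sort_ex (L : list R) : exists l, StronglySorted Rlt l /\ (forall x, In x l <-> In x L) /\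
  (length l <= length L)%nat.
Proof.
  induction L as [|x L IH].
  - exists []. split; [constructor|]. split; simpl; [tauto|lia].
  - destruct IH as [l [H1 [H2 H3]]]. destruct (ins_ex l H1 x) as [l' [H4 [H5 H6]]].
    exists l'. split; auto. split; [|simpl; lia]. intros y. rewrite H5, H2. simpl. intuition.
Qed.

Lemma ss_nth (l : list R) : StronglySorted Rlt l -> forall j k, (j < k)%nat -> (k < length l)%nat ->
  nth j l 0 < nth k l 0.
Proof.
  induction l as [|y t IH]; intros Hs j k Hjk Hk; simpl in *; [lia|].
  inversion Hs; subst. destruct k as [|k]; [lia|]. destruct j as [|j].
  - rewrite Forall_forall in H2. apply H2. apply nth_In. lia.
  - apply IH; auto; lia.
Qed.

Lemma ss_nth_le (l : list R) : StronglySorted Rlt l -> forall j k, (j <= k)%nat -> (k < length l)%nat ->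
  nth j l 0 <= nth k l 0.
Proof.
  intros Hs j k H1 H2. destruct (Nat.eq_dec j k) as [->|]; [lra|].
  left; apply ss_nth; auto; lia.
Qed.

Definition ogap (l : list R) (i : nat) (x : R) : Prop :=
  (i = 0%nat \/ nth (i - 1) l 0 < x) /\ (i = length l \/ x < nth i l 0).

Lemma ogap_noelt l i w : StronglySorted Rlt l -> (i <= length l)%nat -> In w l -> ~ ogap l i w.
Proof.
  intros Hs Hi Hw [H1 H2]. destruct (In_nth l w 0 Hw) as [j [Hj <-]].
  destruct (Nat.lt_ge_cases j i).
  - destruct H1 as [H1|H1]; [lia|]. pose proof (ss_nth_le l Hs j (i - 1) ltac:(lia) ltac:(lia)). lra.
  - destruct H2 as [H2|H2]; [lia|]. pose proof (ss_nth_le l Hs i j ltac:(lia) ltac:(lia)). lra.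
Qed.

Lemma ogap_convex l i : convex_set (ogap l i).
Proof. intros x y z [H1 H2] [H3 H4] H. split; [destruct H1|destruct H4]; auto; right; lra. Qed.

Lemma two_pt a b a' b' x0 y0 : a * x0 + b = a' * x0 + b' -> a * y0 + b = a' * y0 + b' -> x0 <> y0 ->
  forall w, a * w + b = a' * w + b'.
Proof.
  intros H1 H2 H3 w. assert (a = a').
  { apply Rmult_eq_reg_r with (x0 - y0); [|lra]. lra. }
  subst. assert (b = b') by lra. subst. reflexivity.
Qed.

Lemma cont_end_r h p a b d0 : cont h p -> 0 < d0 -> (forall x, p < x < p + d0 -> h x = a * x + b) ->
  h p = a * p + b.
Proof.
  intros Hc Hd0 H. destruct (Req_dec (h p) (a * p + b)) as [|Hne]; auto. exfalso.
  set (k := Rabs (h p - (a * p + b))).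
  assert (Hk : 0 < k) by (apply Rabs_pos_lt; lra).
  destruct (Hc (k / 2) ltac:(lra)) as [d [Hd Hx]].
  assert (0 < Rabs a + 1) by (pose proof (Rabs_pos a); lra).
  set (t := Rmin (Rmin d d0) (k / 4 / (Rabs a + 1)) / 2).
  assert (Ht0 : 0 < t).
  { unfold t. assert (0 < k / 4 / (Rabs a + 1)) by (apply Rdiv_lt_0_compat; lra).
    assert (0 < Rmin d d0) by (apply Rmin_glb_lt; lra).
    assert (0 < Rmin (Rmin d d0) (k / 4 / (Rabs a + 1))) by (apply Rmin_glb_lt; lra). lra. }
  assert (Htd : t < d /\ t < d0).
  { unfold t. pose proof (Rmin_l (Rmin d d0) (k / 4 / (Rabs a + 1))).
    pose proof (Rmin_l d d0). pose proof (Rmin_r d d0). lra. }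
  assert (Hta : t * (Rabs a + 1) <= k / 4).
  { unfold t. pose proof (Rmin_r (Rmin d d0) (k / 4 / (Rabs a + 1))).
    assert (Rmin (Rmin d d0) (k / 4 / (Rabs a + 1)) * (Rabs a + 1) <= k / 4).
    { apply Rmult_le_reg_r with (/ (Rabs a + 1)). apply Rinv_0_lt_compat; lra.
      rewrite Rmult_assoc, Rinv_r by lra. rewrite Rmult_1_r. exact H1. }
    lra. }
  specialize (Hx (p + t)). rewrite H in Hx by lra.
  assert (Hpt : Rabs (p + t - p) < d) by (rewrite Rabs_right; lra).
  specialize (Hx Hpt). apply Rabs_def2 in Hx.
  assert (Hat : Rabs (a * t) <= k / 4).
  { rewrite Rabs_mult, (Rabs_right t) by lra. pose proof (Rabs_pos a). nra. }
  pose proof (Rle_abs (a * t)) as Ha1. pose proof (Rle_abs (- (a * t))) as Ha2.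
  rewrite Rabs_Ropp in Ha2. unfold k in *.
  destruct (Rle_dec 0 (h p - (a * p + b))).
  - rewrite (Rabs_right (h p - (a * p + b))) in * by lra. nra.
  - rewrite (Rabs_left (h p - (a * p + b))) in * by lra. nra.
Qed.

Lemma cont_neg_arg h p : cont h p -> cont (fun x => h (- x)) (- p).
Proof.
  intros Hc e He. destruct (Hc e He) as [d [Hd H]]. exists d. split; auto.
  intros x Hx. rewrite Ropp_involutive. apply H. replace (- x - p) with (- (x - - p)) by ring. rewrite Rabs_Ropp. auto.
Qed.

Lemma cont_end_l h q a b d0 : cont h q -> 0 < d0 -> (forall x, q - d0 < x < q -> h x = a * x + b) ->
  h q = a * q + b.
Proof.
  intros Hc Hd0 H.
  pose proof (cont_end_r (fun x => h (- x)) (- q) (- a) b d0 (cont_neg_arg h q Hc) Hd0).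
  simpl in H0. replace q with (- - q) at 1 by ring. rewrite H0. ring.
  intros x Hx. rewrite H by lra. ring.
Qed.

Lemma gen2 (h : R -> R) (Cs : list (R -> Prop)) :
  (forall p, cont h p) ->
  (forall C, In C Cs -> convex_set C /\ affine_on h C) ->
  (forall x, exists C, In C Cs /\ C x) ->
  exists k, has_pieces h k /\ (k <= S (length Cs))%nat.
Proof.
  intros Hc HC Hcov.
  destruct (sups_exist Cs) as [L [HL1 HL2]]. { intros; apply HC; auto. }
  destruct (sort_ex L) as [l [Hs [Hl1 Hl2]]].
  exists (S (length l)). split; [|lia].
  exists l. split; auto. split; [apply StronglySorted_Sorted; auto|].
  intros i Hi.
  assert (Hfw : forall C, In C Cs -> forall x y, ogap l i x -> ogap l i y -> x <= y -> C x -> C y).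
  { intros C HCin x y Hx Hy Hxy HCx. destruct (classic (C y)) as [|Hn]; auto. exfalso.
    destruct (HL2 C HCin x y HCx Hn Hxy) as [s [Hs1 Hs2]].
    apply (ogap_noelt l i s Hs Hi); [apply Hl1; auto|].
    apply (ogap_convex l i x s y); auto. }
  assert (Htwo : exists x0 y0, x0 < y0 /\ ogap l i x0 /\ ogap l i y0).
  { unfold ogap. destruct (Nat.eq_dec i 0) as [Hi0|Hi0]; destruct (Nat.eq_dec i (length l)) as [Hil|Hil].
    - exists 0, 1. split; [lra|]. tauto.
    - exists (nth i l 0 - 2), (nth i l 0 - 1). split; [lra|]. split; split; auto; right; lra.
    - exists (nth (i - 1) l 0 + 1), (nth (i - 1) l 0 + 2). split; [lra|]. split; split; auto; right; lra.
    - pose proof (ss_nth l Hs (i - 1) i ltac:(lia) ltac:(lia)).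
      set (lo := nth (i - 1) l 0) in *. set (hi := nth i l 0) in *.
      exists (lo + (hi - lo) / 3), (lo + 2 * (hi - lo) / 3). split; [lra|].
      split; split; right; lra. }
  destruct Htwo as [x0 [y0 [Hxy [Hx0 Hy0]]]].
  destruct (Hcov x0) as [C0 [HC0 HC0x]].
  destruct (proj2 (HC C0 HC0)) as [a [b Hab]].
  assert (Hopen : forall w, ogap l i w -> h w = a * w + b).
  { intros w Hw. destruct (Rle_dec x0 w).
    - apply Hab. apply (Hfw C0 HC0 x0 w); auto.
    - destruct (Hcov w) as [Cw [HCw HCwx]].
      destruct (proj2 (HC Cw HCw)) as [a' [b' Hab']].
      assert (E1 : h x0 = a' * x0 + b') by (apply Hab'; apply (Hfw Cw HCw w x0); auto; lra).
      assert (E2 : h y0 = a' * y0 + b') by (apply Hab'; apply (Hfw Cw HCw w y0); auto; lra).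
      rewrite (Hab x0) in E1 by auto. rewrite (Hab y0) in E2 by (apply (Hfw C0 HC0 x0 y0); auto; lra).
      rewrite (Hab' w) by auto. symmetry. apply (two_pt a b a' b' x0 y0); auto; lra. }
  exists a, b. intros x [Hx1 Hx2].
  destruct (classic (ogap l i x)) as [Ho|Ho]; [auto|].
  unfold ogap in Ho.
  assert (Hcase : (i <> 0%nat /\ x = nth (i - 1) l 0) \/ (i <> length l /\ x = nth i l 0)).
  { destruct (Nat.eq_dec i 0) as [Hi0|Hi0]; destruct (Nat.eq_dec i (length l)) as [Hil|Hil].
    - exfalso; apply Ho; split; left; auto.
    - destruct Hx2 as [Hx2|Hx2]; [lia|].
      destruct (Req_dec x (nth i l 0)); [right; split; auto|].
      exfalso; apply Ho; split; [left; auto|right; lra].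
    - destruct Hx1 as [Hx1|Hx1]; [lia|].
      destruct (Req_dec x (nth (i - 1) l 0)); [left; split; auto|].
      exfalso; apply Ho; split; [right; lra|left; auto].
    - destruct Hx2 as [Hx2|Hx2]; [lia|]. destruct Hx1 as [Hx1|Hx1]; [lia|].
      destruct (Req_dec x (nth (i - 1) l 0)); [left; split; auto|].
      destruct (Req_dec x (nth i l 0)); [right; split; auto|].
      exfalso; apply Ho; split; right; lra. }
  destruct Hcase as [[Hi0 ->]|[Hil ->]].
  - destruct (Nat.eq_dec i (length l)) as [Hil|Hil].
    + apply (cont_end_r h _ a b 1); [apply Hc|lra|]. intros x Hx. apply Hopen. split; [right; lra|left; auto].
    + pose proof (ss_nth l Hs (i - 1) i ltac:(lia) ltac:(lia)).
      apply (cont_end_r h _ a b (nth i l 0 - nth (i - 1) l 0)); [apply Hc|lra|].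
      intros x Hx. apply Hopen. split; right; lra.
  - destruct (Nat.eq_dec i 0) as [Hi0|Hi0].
    + apply (cont_end_l h _ a b 1); [apply Hc|lra|]. intros x Hx. apply Hopen. split; [left; auto|right; lra].
    + pose proof (ss_nth l Hs (i - 1) i ltac:(lia) ltac:(lia)).
      apply (cont_end_l h _ a b (nth i l 0 - nth (i - 1) l 0)); [apply Hc|lra|].
      intros x Hx. apply Hopen. split; right; lra.
Qed.



Definition PL (f : R -> R) (l : list R) := forall i, (i <= length l)%nat ->
  affine_on f (fun x => (i = 0%nat \/ nth (i - 1) l 0 <= x) /\ (i = length l \/ x <= nth i l 0)).

Lemma idx l x0 : ~ In x0 l -> exists i, (i <= length l)%nat /\
  (i = 0%nat \/ nth (i - 1) l 0 < x0) /\ (i = length l \/ x0 < nth i l 0).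
Proof.
  induction l as [|w t IH]; intros Hn.
  - exists 0%nat. simpl. split; [lia|]. split; left; auto.
  - simpl in Hn. destruct (Rtotal_order x0 w) as [H|[H|H]].
    + exists 0%nat. simpl. split; [lia|]. split; [left; auto|right; auto].
    + exfalso; apply Hn; auto.
    + destruct IH as [i [H1 [H2 H3]]]. { intro; apply Hn; auto. }
      exists (S i). simpl. split; [lia|]. split.
      * right. replace (i - 0)%nat with i by lia. destruct i as [|i]; simpl; auto.
        destruct H2 as [H2|H2]; [lia|]. replace (S i - 1)%nat with i in H2 by lia. auto.
      * destruct H3; [left; lia|right; auto].
Qed.

Lemma PA f l I : PL f l -> convex_set I ->
  (forall x y w, I x -> I y -> In w l -> ~ (x < w < y)) -> affine_on f I.
Proof.
  intros Hf Hc Hav.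
  destruct (classic (exists x1 x2, I x1 /\ I x2 /\ x1 < x2)) as [[x1 [x2 [H1 [H2 H3]]]]|Hno].
  - set (x0 := (x1 + x2) / 2).
    assert (Hx0 : I x0) by (apply (Hc x1 x0 x2); auto; unfold x0; lra).
    assert (Hn : ~ In x0 l) by (intro Hin; apply (Hav x1 x2 x0); auto; unfold x0; lra).
    destruct (idx l x0 Hn) as [i [Hi [Hlo Hhi]]].
    destruct (Hf i Hi) as [a [b Hab]]. exists a, b. intros y Hy. apply Hab. split.
    + destruct (Nat.eq_dec i 0); [left; auto|]. destruct Hlo as [Hlo|Hlo]; [lia|right].
      destruct (Rle_dec (nth (i - 1) l 0) y) as [|Hnl]; auto. exfalso.
      apply Rnot_le_lt in Hnl.
      apply (Hav y x0 (nth (i - 1) l 0)); [auto|auto|apply nth_In; lia|lra].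
    + destruct (Nat.eq_dec i (length l)); [left; auto|]. destruct Hhi as [Hhi|Hhi]; [lia|right].
      destruct (Rle_dec y (nth i l 0)) as [|Hnl]; auto. exfalso. apply Rnot_le_lt in Hnl.
      apply (Hav x0 y (nth i l 0)); [auto|auto|apply nth_In; lia|lra].
  - destruct (classic (exists x1, I x1)) as [[x1 H1]|Hn].
    + exists 0, (f x1). intros y Hy. destruct (Rtotal_order y x1) as [H|[H|H]].
      * exfalso; apply Hno; eauto.
      * subst; ring.
      * exfalso; apply Hno; eauto.
    + exists 0, 0. intros y Hy. exfalso; eauto.
Qed.

Definition qc (g : R -> R) := forall x y z, x <= y <= z -> Rmin (g x) (g z) <= g y.
Definition qv (g : R -> R) := forall x y z, x <= y <= z -> g y <= Rmax (g x) (g z).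
Definition cross (g : R -> R) (c w : R) := exists x y al be, x < w < y /\ al <> 0 /\
  (forall t, x <= t <= y -> g t = al * t + be) /\ g w = c.

Lemma cross3 g c w1 w2 w3 : qc g \/ qv g -> w1 < w2 < w3 ->
  g w1 = c -> cross g c w2 -> g w3 = c -> False.
Proof.
  intros Hq Hw E1 [x [y [al [be [Hxy [Hal [Hg E2]]]]]]] E3.
  set (d := Rmin (Rmin (w2 - x) (y - w2)) (Rmin (w2 - w1) (w3 - w2)) / 2).
  assert (Hd : 0 < d /\ d < w2 - x /\ d < y - w2 /\ d < w2 - w1 /\ d < w3 - w2).
  { unfold d. pose proof (Rmin_l (Rmin (w2 - x) (y - w2)) (Rmin (w2 - w1) (w3 - w2))).
    pose proof (Rmin_r (Rmin (w2 - x) (y - w2)) (Rmin (w2 - w1) (w3 - w2))).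
    pose proof (Rmin_l (w2 - x) (y - w2)). pose proof (Rmin_r (w2 - x) (y - w2)).
    pose proof (Rmin_l (w2 - w1) (w3 - w2)). pose proof (Rmin_r (w2 - w1) (w3 - w2)).
    assert (0 < Rmin (Rmin (w2 - x) (y - w2)) (Rmin (w2 - w1) (w3 - w2))).
    { apply Rmin_glb_lt; apply Rmin_glb_lt; lra. }
    lra. }
  assert (Gp : g (w2 + d) = c + al * d).
  { rewrite Hg by lra. rewrite Hg in E2 by lra. nra. }
  assert (Gm : g (w2 - d) = c - al * d).
  { rewrite Hg by lra. rewrite Hg in E2 by lra. nra. }
  assert (al * d <> 0) by (apply Rmult_integral_contrapositive; split; lra).
  destruct Hq as [Hq|Hq].
  - pose proof (Hq w1 (w2 + d) w3 ltac:(lra)). pose proof (Hq w1 (w2 - d) w3 ltac:(lra)).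
    rewrite E1, E3, Rmin_left in * by lra. lra.
  - pose proof (Hq w1 (w2 + d) w3 ltac:(lra)). pose proof (Hq w1 (w2 - d) w3 ltac:(lra)).
    rewrite E1, E3, Rmax_left in * by lra. lra.
Qed.

Lemma cross_val g c w : cross g c w -> g w = c.
Proof. intros [? [? [? [? [? [? [? ?]]]]]]]; auto. Qed.

Lemma cross3' g c w1 w2 w3 : qc g \/ qv g -> cross g c w1 -> cross g c w2 -> cross g c w3 ->
  w1 <> w2 -> w1 <> w3 -> w2 <> w3 -> False.
Proof.
  intros Hq H1 H2 H3 N1 N2 N3.
  pose proof (cross_val _ _ _ H1). pose proof (cross_val _ _ _ H2). pose proof (cross_val _ _ _ H3).
  destruct (Rtotal_order w1 w2) as [A|[A|A]]; [|contradiction|];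
  destruct (Rtotal_order w1 w3) as [B|[B|B]]; try contradiction;
  destruct (Rtotal_order w2 w3) as [C|[C|C]]; try contradiction.
  - apply (cross3 g c w1 w2 w3); auto.
  - apply (cross3 g c w1 w3 w2); auto.
  - lra.
  - apply (cross3 g c w3 w1 w2); auto; lra.
  - apply (cross3 g c w2 w1 w3); auto; lra.
  - lra.
  - apply (cross3 g c w2 w3 w1); auto; lra.
  - apply (cross3 g c w3 w2 w1); auto; lra.
Qed.

Lemma cross_le2 g c : qc g \/ qv g -> exists Z, (length Z <= 2)%nat /\ forall w, cross g c w -> In w Z.
Proof.
  intros Hq. destruct (classic (exists w1, cross g c w1)) as [[w1 H1]|Hn].
  - destruct (classic (exists w2, cross g c w2 /\ w2 <> w1)) as [[w2 [H2 N]]|Hn2].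
    + exists [w1; w2]. split; [simpl; lia|]. intros w Hw. simpl.
      destruct (Req_dec w w1); [auto|]. destruct (Req_dec w w2); [auto|].
      exfalso. apply (cross3' g c w1 w2 w Hq); auto.
    + exists [w1]. split; [simpl; lia|]. intros w Hw. simpl. left.
      destruct (Req_dec w1 w); auto. exfalso; apply Hn2; eauto.
  - exists []. split; [simpl; lia|]. intros w Hw; exfalso; eauto.
Qed.

Lemma cross_all g lF : qc g \/ qv g -> exists Zs, (length Zs <= 2 * length lF)%nat /\
  forall c w, In c lF -> cross g c w -> In w Zs.
Proof.
  intros Hq. induction lF as [|c lF IH].
  - exists []. split; [simpl; lia|]. intros c w [].
  - destruct IH as [Zs [H1 H2]]. destruct (cross_le2 g c Hq) as [Z [H3 H4]].
    exists (Z ++ Zs). split; [rewrite length_app; simpl; lia|].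
    intros c' w [<-|Hc] Hw; apply in_or_app; [left; apply H4; auto|right; apply (H2 c'); auto].
Qed.

Lemma maxle L x : (exists w, In w L /\ w <= x) ->
  exists z, In z L /\ z <= x /\ forall w, In w L -> w <= x -> w <= z.
Proof.
  induction L as [|v L IH]; intros [w [Hw Hwx]]; [destruct Hw|].
  destruct (classic (exists w, In w L /\ w <= x)) as [He|Hn].
  - destruct (IH He) as [z [Hz1 [Hz2 Hz3]]].
    destruct (Rle_dec v x) as [Hv|Hv].
    + destruct (Rle_dec v z).
      * exists z. split; [simpl; auto|]. split; auto. intros u [<-|Hu] Hux; auto.
      * exists v. split; [simpl; auto|]. split; auto. intros u [<-|Hu] Hux; [lra|].
        specialize (Hz3 u Hu Hux); lra.
    + exists z. split; [simpl; auto|]. split; auto. intros u [<-|Hu] Hux; [lra|auto].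
  - destruct Hw as [->|Hw]; [|exfalso; apply Hn; eauto].
    exists w. split; [simpl; auto|]. split; auto. intros u [<-|Hu] Hux; [lra|].
    exfalso; apply Hn; eauto.
Qed.

Lemma comp_affine F g lF lg (Zs : list R) C :
  PL F lF -> PL g lg -> (forall c w, In c lF -> cross g c w -> In w Zs) ->
  convex_set C -> (forall x y w, C x -> C y -> In w (lg ++ Zs) -> ~ (x < w < y)) ->
  affine_on (fun x => F (g x)) C.
Proof.
  intros HF Hg HZ Hc Hav.
  destruct (PA g lg C Hg Hc) as [al [be Hab]].
  { intros x y w Hx Hy Hw. apply Hav; auto. apply in_or_app; auto. }
  set (J := fun y => exists t, C t /\ y = al * t + be).
  assert (HJ : convex_set J).
  { intros y1 y y2 [t1 [Ht1 ->]] [t2 [Ht2 ->]] Hy.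
    destruct (Req_dec al 0) as [Ha|Ha].
    - exists t1. split; auto. subst al. lra.
    - set (w := (y - be) / al). exists w. split; [|unfold w; field; auto].
      assert (Ew : al * w = y - be) by (unfold w; field; auto). clearbody w.
      destruct (Rdichotomy _ _ Ha) as [Hn|Hp];
      (destruct (Rle_dec t1 t2); [apply (Hc t1 _ t2)| apply (Hc t2 _ t1)]; auto; split; nra). }
  destruct (PA F lF J HF HJ) as [a [b HFab]].
  { intros y1 y2 c [t1 [Ht1 ->]] [t2 [Ht2 ->]] Hc' [Hl Hr].
    assert (Ha : al <> 0) by (intro; subst al; lra).
    set (w := (c - be) / al).
    assert (Ew : al * w + be = c) by (unfold w; field; auto).
    assert (Hbt : (t1 < w < t2) \/ (t2 < w < t1)).
    { destruct (Rle_dec 0 al).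
      - left. split; apply Rmult_lt_reg_l with al; lra.
      - right. split; apply Rmult_lt_reg_l with (- al); lra. }
    assert (Hcr : cross g c w).
    { destruct Hbt as [[B1 B2]|[B1 B2]].
      - exists t1, t2, al, be. split; [lra|]. split; auto. split.
        + intros t Ht. apply Hab. apply (Hc t1 t t2); auto.
        + rewrite Hab; auto. apply (Hc t1 w t2); auto; lra.
      - exists t2, t1, al, be. split; [lra|]. split; auto. split.
        + intros t Ht. apply Hab. apply (Hc t2 t t1); auto.
        + rewrite Hab; auto. apply (Hc t2 w t1); auto; lra. }
    pose proof (HZ c w Hc' Hcr) as Hw.
    destruct Hbt as [B|B]; [apply (Hav t1 t2 w)|apply (Hav t2 t1 w)]; auto; apply in_or_app; auto. }
  exists (a * al), (a * be + b). intros x Hx. rewrite Hab by auto.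
  rewrite HFab. ring. exists x; split; auto.
Qed.

Lemma comp_cells F g lF lg : PL F lF -> PL g lg -> qc g \/ qv g ->
  exists Cs : list (R -> Prop), (length Cs <= S (length lg + 2 * length lF))%nat /\
   (forall C, In C Cs -> convex_set C /\ affine_on (fun x => F (g x)) C) /\
   (forall x, exists C, In C Cs /\ C x).
Proof.
  intros HF Hg Hq. destruct (cross_all g lF Hq) as [Zs [HZ1 HZ2]].
  set (Lu := lg ++ Zs).
  set (C0 := fun x => forall w, In w Lu -> x <= w).
  set (cell := fun z => fun x => z <= x /\ forall w, In w Lu -> w <= z \/ x <= w).
  exists (C0 :: map cell Lu). split.
  { simpl. rewrite length_map. unfold Lu. rewrite length_app. lia. }
  assert (Hcells : forall C, In C (C0 :: map cell Lu) -> convex_set C /\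
             (forall x y w, C x -> C y -> In w Lu -> ~ (x < w < y))).
  { intros C [<-|HC].
    - split.
      + intros x y z Hx Hz Hy w Hw. specialize (Hz w Hw). lra.
      + intros x y w Hx Hy Hw Hb. specialize (Hy w Hw). lra.
    - apply in_map_iff in HC. destruct HC as [z [<- Hz]]. split.
      + intros x y z' [Hx1 Hx2] [Hz1 Hz2] Hy. split; [lra|].
        intros w Hw. destruct (Hz2 w Hw); [left; auto|right; lra].
      + intros x y w [Hx1 Hx2] [Hy1 Hy2] Hw Hb. destruct (Hy2 w Hw); lra. }
  split.
  - intros C HC. destruct (Hcells C HC) as [Hc Hav]. split; auto.
    apply (comp_affine F g lF lg Zs C); auto.
  - intros x. destruct (classic (exists w, In w Lu /\ w <= x)) as [He|Hn].
    + destruct (maxle Lu x He) as [z [Hz1 [Hz2 Hz3]]].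
      exists (cell z). split; [right; apply in_map; auto|].
      split; auto. intros w Hw. destruct (Rle_dec w x); [left; auto|right; lra].
    + exists C0. split; [left; auto|]. intros w Hw. destruct (Rle_dec x w); auto.
      exfalso; apply Hn. exists w; split; auto; lra.
Qed.



Lemma cell_convex C (u H : R -> R) a b : convex_set C -> (forall x, C x -> u x = a * x + b) ->
  concave H -> convex_set (fun x => C x /\ u x <= H x).
Proof.
  intros Hc Hu HH x y z [Cx Ux] [Cz Uz] Hy.
  assert (Cy : C y) by (apply (Hc x y z); auto). split; auto.
  destruct (Req_dec x z) as [E|E].
  - subst z. assert (y = x) by lra. subst; auto.
  - specialize (HH x y z Hy). rewrite Hu in * by auto.
    assert ((z - y) * (a * x + b) <= (z - y) * H x) by (apply Rmult_le_compat_l; lra).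
    assert ((y - x) * (a * z + b) <= (y - x) * H z) by (apply Rmult_le_compat_l; lra).
    assert ((z - x) * (a * y + b) <= (z - x) * H y) by nra.
    apply Rmult_le_reg_l with (z - x); lra.
Qed.

Lemma Sdown_pieces S : S <> [] -> Forall affine S -> exists n, has_pieces (Sdown S) n.
Proof.
  intros HS AS.
  destruct (gen2 (Sdown S) (map (fun f => fun x => f x <= Sdown S x) S)) as [k [Hk _]].
  - intros p; apply Sdown_cont; auto.
  - intros C HC. apply in_map_iff in HC. destruct HC as [f [<- Hf]].
    rewrite Forall_forall in AS. destruct (AS f Hf) as [a [b Hab]].
    split.
    + pose proof (cell_convex (fun _ => True) f (Sdown S) a b) as HC.
      intros x y z Hx Hz Hy. apply (HC ltac:(intros ? ? ? ? ? ?; auto) ltac:(intros; auto)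
         (Sdown_concave S (proj2 (Forall_forall _ _) AS)) x y z); auto.
    + exists a, b. intros x Hx. rewrite <- Hab. pose proof (Sdown_le S f x Hf). lra.
  - intros x. destruct (Sdown_att S x HS) as [f [Hf E]]. exists (fun x => f x <= Sdown S x).
    split; [apply (in_map (fun (f : R -> R) (x : R) => f x <= Sdown S x)); auto|]. simpl. lra.
  - eauto.
Qed.

Lemma Sup_pieces S : S <> [] -> Forall affine S -> exists n, has_pieces (Sup S) n.
Proof.
  intros HS AS. rewrite Sup_neg_fun.
  destruct (Sdown_pieces (map negf S)) as [n Hn]; [apply map_neq_nil; auto|apply negf_affine; auto|].
  exists n. apply has_pieces_neg; auto.
Qed.

Lemma get_PL h : (exists n, has_pieces h n) -> exists l, S (length l) = npieces h /\ PL h l.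
Proof.
  intros He. destruct (npieces_spec h He) as [[l [H1 [H2 H3]]] _]. exists l. split; auto.
Qed.

Lemma concave_qc g : concave g -> qc g.
Proof.
  intros Hc x y z Hy. specialize (Hc x y z Hy).
  destruct (Req_dec x z) as [E|E].
  - subst z. assert (y = x) by lra. subst. apply Rmin_l.
  - pose proof (Rmin_l (g x) (g z)). pose proof (Rmin_r (g x) (g z)).
    assert ((z - y) * Rmin (g x) (g z) <= (z - y) * g x) by (apply Rmult_le_compat_l; lra).
    assert ((y - x) * Rmin (g x) (g z) <= (y - x) * g z) by (apply Rmult_le_compat_l; lra).
    apply Rmult_le_reg_l with (z - x); lra.
Qed.

Lemma Sup_qv S : Forall affine S -> qv (Sup S).
Proof.
  intros AS x y z Hy. rewrite !Sup_neg.
  pose proof (concave_qc _ (Sdown_concave (map negf S) (negf_affine S AS)) x y z Hy).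
  unfold Rmin, Rmax in *.
  destruct (Rle_dec (Sdown (map negf S) x) (Sdown (map negf S) z));
  destruct (Rle_dec (- Sdown (map negf S) x) (- Sdown (map negf S) z)); lra.
Qed.

Lemma compset_affine F G : Forall affine F -> Forall affine G -> Forall affine (compset F G).
Proof.
  intros AF AG. apply Forall_forall. intros h Hh.
  destruct (compset_in _ _ _ Hh) as [f [g [Hf [Hg ->]]]].
  rewrite Forall_forall in AF, AG.
  destruct (AF f Hf) as [a [b Ha]]. destruct (AG g Hg) as [c [d Hc]].
  exists (a * c), (a * d + b). intros x. rewrite Ha, Hc. ring.
Qed.

Lemma part3 F G : F <> nil -> G <> nil -> Forall affine F -> Forall affine G ->
  (npieces (Sdown (compset F G)) <= 4 * npieces (Sdown F) + 2 * npieces (Sdown G)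
                         + 2 * npieces (Sup G))%nat.
Proof.
  intros HF HG AF AG.
  destruct (get_PL (Sdown F) (Sdown_pieces F HF AF)) as [lF [EF PF]].
  destruct (get_PL (Sdown G) (Sdown_pieces G HG AG)) as [lGd [EGd PGd]].
  destruct (get_PL (Sup G) (Sup_pieces G HG AG)) as [lGu [EGu PGu]].
  destruct (comp_cells (Sdown F) (Sdown G) lF lGd PF PGd) as [Cs1 [L1 [A1 V1]]].
  { left. apply concave_qc. apply Sdown_concave; auto. }
  destruct (comp_cells (Sdown F) (Sup G) lF lGu PF PGu) as [Cs2 [L2 [A2 V2]]].
  { right. apply Sup_qv; auto. }
  set (Hd := Sdown (compset F G)).
  assert (E : forall x, Hd x = Rmin (Sdown F (Sdown G x)) (Sdown F (Sup G x))).
  { apply (part12 F G HF HG AF AG). }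
  assert (AH : Forall affine (compset F G)) by (apply compset_affine; auto).
  assert (CH : concave Hd) by (apply Sdown_concave; auto).
  set (u := fun x => Sdown F (Sdown G x)). set (v := fun x => Sdown F (Sup G x)).
  destruct (gen2 Hd (map (fun C => fun x => C x /\ u x <= Hd x) Cs1 ++
                     map (fun C => fun x => C x /\ v x <= Hd x) Cs2)) as [k [Hk Hkl]].
  - intros p. apply Sdown_cont; auto.
  - intros D HD. apply in_app_or in HD. destruct HD as [HD|HD]; apply in_map_iff in HD;
      destruct HD as [C [<- HC]].
    + destruct (A1 C HC) as [Cc [a [b Hab]]]. split.
      * apply (cell_convex C u Hd a b); auto.
      * exists a, b. intros x [Cx Ux]. rewrite <- (Hab x Cx). fold (u x).
        pose proof (E x). fold (u x) in H. fold (v x) in H. pose proof (Rmin_l (u x) (v x)). lra.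
    + destruct (A2 C HC) as [Cc [a [b Hab]]]. split.
      * apply (cell_convex C v Hd a b); auto.
      * exists a, b. intros x [Cx Ux]. rewrite <- (Hab x Cx). fold (v x).
        pose proof (E x). fold (u x) in H. fold (v x) in H. pose proof (Rmin_r (u x) (v x)). lra.
  - intros x. pose proof (E x) as Ex. fold (u x) in Ex. fold (v x) in Ex.
    destruct (Rle_dec (u x) (v x)).
    + destruct (V1 x) as [C [HC Cx]]. exists (fun x => C x /\ u x <= Hd x). split.
      * apply in_or_app. left. apply (in_map (fun C (x : R) => C x /\ u x <= Hd x)). auto.
      * split; auto. rewrite Ex, Rmin_left; lra.
    + destruct (V2 x) as [C [HC Cx]]. exists (fun x => C x /\ v x <= Hd x). split.
      * apply in_or_app. right. apply (in_map (fun C (x : R) => C x /\ v x <= Hd x)). auto.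
      * split; auto. rewrite Ex, Rmin_right; lra.
  - assert (Hle : (npieces Hd <= k)%nat).
    { apply (proj2 (npieces_spec Hd (ex_intro _ k Hk))). auto. }
    rewrite length_app, !length_map in Hkl. lia.
Qed.

Lemma part4 F G : F <> nil -> G <> nil -> Forall affine F -> Forall affine G ->
  (npieces (Sup (compset F G)) <= 4 * npieces (Sup F) + 2 * npieces (Sdown G)
                         + 2 * npieces (Sup G))%nat.
Proof.
  intros HF HG AF AG.
  set (F' := map negf F).
  assert (HF' : F' <> []) by (apply map_neq_nil; auto).
  assert (AF' : Forall affine F') by (apply negf_affine; auto).
  pose proof (part3 F' G HF' HG AF' AG) as P.
  assert (E1 : Sup (compset F G) = fun x => - Sdown (compset F' G) x).
  { apply functional_extensionality. intros x.
    rewrite (proj1 (part12 F' G HF' HG AF' AG)), (proj2 (part12 F G HF HG AF AG)).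
    rewrite !Sup_neg. fold F'.
    set (a := Sdown F' (Sdown G x)). set (b := Sdown F' (- Sdown (map negf G) x)).
    unfold Rmin, Rmax. destruct (Rle_dec a b); destruct (Rle_dec (- a) (- b)); lra. }
  rewrite E1, npieces_neg. rewrite Sup_neg_fun, npieces_neg. fold F'. exact P.
Qed.

Theorem lemma1 (F G : list (R -> R)) :
  F <> nil -> G <> nil ->
  Forall affine F -> Forall affine G ->
  let H := compset F G in
  (forall x, Sdown H x = Rmin (Sdown F (Sdown G x)) (Sdown F (Sup G x))) /\
  (forall x, Sup H x = Rmax (Sup F (Sdown G x)) (Sup F (Sup G x))) /\
  (npieces (Sdown H) <= 4 * npieces (Sdown F) + 2 * npieces (Sdown G)
                         + 2 * npieces (Sup G))%nat /\
  (npieces (Sup H) <= 4 * npieces (Sup F) + 2 * npieces (Sdown G)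
                         + 2 * npieces (Sup G))%nat.
Proof.
  intros HF HG AF AG H. subst H.
  destruct (part12 F G HF HG AF AG) as [P1 P2].
  split; [exact P1|]. split; [exact P2|]. split.
  - apply part3; auto.
  - apply part4; auto.
Qed.
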